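(* Let $n,d\ge1$, $p>d$, and let $\Delta$, $Z$, $A=ZZ^{\top}+\Delta$, $f$, $\Lambda_{ii}$ and $d_F$ be as in the context. Let $\delta>0$ and let $S$ be a second-order critical point of $f$ satisfying the proximity condition \[ d_F(S,Z)\le\delta\sqrt{\frac dn}\,\|\Delta\|_{\mathrm{op}}. \] Then \[ \max_{1\le i\le n}\Big\|\sum_{j\ne i}\Delta_{ij}S_j\Big\|_{\mathrm{op}}\le \delta\sqrt{\frac dn}\,\|\Delta\|_{\mathrm{op}}\max_{1\le i\le n}\|\Delta_i\|_{\mathrm{op}}+\max_{1\le i\le n}\|\Delta_i^{\top}Z\|_{\mathrm{op}}, \] and if \[ n\ge\frac{3\delta^2d\|\Delta\|_{\mathrm{op}}^2}{2n}+\max_{1\le i\le n}\Big\|\sum_{j\ne i}\Delta_{ij}S_j\Big\|_{\mathrm{op}}+\|\Delta\|_{\mathrm{op}}, \] then $S$ is the unique global maximizer of both (P) and (SDP) (in the sense that $SS^{\top}$ is the unique global maximizer of (SDP), has rank $d$, and equals $RR^{\top}$ for the global maximizer $R$ of (P)). In particular this conclusion holds whenever \[ n\ge\frac{3\delta^2d\|\Delta\|_{\mathrm{op}}^2}{2n}+\delta\sqrt{\frac dn}\,\|\Delta\|_{\mathrm{op}}\max_{i}\|\Delta_i\|_{\mathrm{op}}+\max_i\|\Delta_i^{\top}Z\|_{\mathrm{op}}+\|\Delta\|_{\mathrm{op}}. \]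
   Context: $\Delta\in\mathbb{R}^{nd\times nd}$ is symmetric with $d\times d$ blocks $\Delta_{ij}$, $\Delta_{ji}=\Delta_{ij}^{\top}$, $\Delta_{ii}=0$; $\Delta_i^{\top}=[\Delta_{i1},\dots,\Delta_{in}]$ is its $i$-th block row. $Z^{\top}=[I_d,\dots,I_d]\in\mathbb{R}^{d\times nd}$, $A=ZZ^{\top}+\Delta$ (so $A_{ij}=I_d+\Delta_{ij}$). (P) is $\max_{R_i\in O(d)}\sum_{i,j}\langle R_iR_j^{\top},A_{ij}\rangle$; (SDP) is $\max\{\langle A,X\rangle: X\succeq0, X_{ii}=I_d\}$. $\mathrm{St}(d,p)=\{S_i\in\mathbb{R}^{d\times p}:S_iS_i^{\top}=I_d\}$; $S\in\mathbb{R}^{nd\times p}$ has blocks $S_i\in\mathrm{St}(d,p)$ and $f(S)=\langle A,SS^{\top}\rangle=\sum_{i,j}\langle A_{ij},S_iS_j^{\top}\rangle$. Put $\Lambda_{ii}=\frac12\sum_{j=1}^n(S_iS_j^{\top}A_{ji}+A_{ij}S_jS_i^{\top})$. The tangent space at $S_i$ is $T_{S_i}=\{Y\in\mathbb{R}^{d\times p}:S_iY^{\top}+YS_i^{\top}=0\}$. $S$ is a second-order critical point of $f$ if $\sum_jA_{ij}S_j=\Lambda_{ii}S_i$ for all $i$ (vanishing Riemannian gradient) and $\sum_i\langle\Lambda_{ii},\dot S_i\dot S_i^{\top}\rangle\ge\sum_{i,j}\langle A_{ij},\dot S_i\dot S_j^{\top}\rangle$ for all $\dot S_i\in T_{S_i}$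 (negative semidefinite Riemannian Hessian). $d_F(S,Z)=\min\{(\sum_{i}\|S_i-Q\|_F^2)^{1/2}: Q\in\mathbb{R}^{d\times p},QQ^{\top}=I_d\}$. *)

(* Defs.v *)
From HB Require Import structures.
From mathcomp Require Import all_boot all_order all_algebra.
From mathcomp Require Import classical_sets reals.
Set Implicit Arguments. Unset Strict Implicit. Unset Printing Implicit Defensive.
Import Order.TTheory GRing.Theory Num.Theory.
Local Open Scope ring_scope.
Local Open Scope classical_set_scope.

Section Defs.
Variable R : realType.

Definition fip m k (X Y : 'M[R]_(m, k)) : R := \sum_(a < m) \sum_(b < k) X a b * Y a b.
Definition frob m k (X : 'M[R]_(m, k)) : R := Num.sqrt (fip X X).

Definition opnorm m k (M : 'M[R]_(m, k)) : R :=
  sup [set y | exists x : 'cV[R]_k, frob x <= 1 /\ y = frob (M *m x)].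

Variables n d : nat.

(* Block structure: row index (i, a) with i : 'I_n, a : 'I_d is encoded
   as mxvec_index i a : 'I_(n * d). *)
Definition blk (M : 'M[R]_(n * d)) (i j : 'I_n) : 'M[R]_(d, d) :=
  \matrix_(a, b) M (mxvec_index i a) (mxvec_index j b).
Definition rblk k (S : 'M[R]_(n * d, k)) (i : 'I_n) : 'M[R]_(d, k) :=
  \matrix_(a, b) S (mxvec_index i a) b.
(* i-th block row [Delta_i1, ..., Delta_in] = Delta_i^T  (d x nd) *)
Definition blkrow (M : 'M[R]_(n * d)) (i : 'I_n) : 'M[R]_(d, n * d) :=
  \matrix_(a, l) M (mxvec_index i a) l.

(* Z^T = [I_d, ..., I_d] *)
Definition Zmx : 'M[R]_(n * d, d) :=
  \matrix_(k, b) (\sum_(i < n) (k == mxvec_index i b)%:R).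

Definition Amx (Delta : 'M[R]_(n * d)) : 'M[R]_(n * d) := Zmx *m Zmx^T + Delta.

Definition fobj (A : 'M[R]_(n * d)) p (S : 'M[R]_(n * d, p)) : R := fip A (S *m S^T).

Definition Lam (A : 'M[R]_(n * d)) p (S : 'M[R]_(n * d, p)) (i : 'I_n) : 'M[R]_d :=
  2^-1 *: \sum_(j < n) (rblk S i *m (rblk S j)^T *m blk A j i
                       + blk A i j *m rblk S j *m (rblk S i)^T).

Definition tangent d' p (Si Y : 'M[R]_(d', p)) : Prop :=
  Si *m Y^T + Y *m Si^T = 0.

Definition stiefel_blocks p (S : 'M[R]_(n * d, p)) : Prop :=
  forall i, rblk S i *m (rblk S i)^T = 1%:M.

Definition second_order_critical (A : 'M[R]_(n * d)) p (S : 'M[R]_(n * d, p)) : Prop :=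
  stiefel_blocks S /\
  (forall i, \sum_(j < n) blk A i j *m rblk S j = Lam A S i *m rblk S i) /\
  (forall Sd : 'M[R]_(n * d, p), (forall i, tangent (rblk S i) (rblk Sd i)) ->
     \sum_(i < n) \sum_(j < n) fip (blk A i j) (rblk Sd i *m (rblk Sd j)^T)
       <= \sum_(i < n) fip (Lam A S i) (rblk Sd i *m (rblk Sd i)^T)).

Definition dF p (S : 'M[R]_(n * d, p)) : R :=
  inf [set y | exists Q : 'M[R]_(d, p), Q *m Q^T = 1%:M /\
                 y = Num.sqrt (\sum_(i < n) frob (rblk S i - Q) ^+ 2)].

Definition psd m (X : 'M[R]_m) : Prop :=
  X^T = X /\ forall x : 'cV[R]_m, 0 <= (x^T *m X *m x) 0 0.

Definition sdp_feasible (X : 'M[R]_(n * d)) : Prop :=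
  psd X /\ forall i, blk X i i = 1%:M.

Definition P_feasible (Rm : 'M[R]_(n * d, d)) : Prop :=
  forall i, rblk Rm i *m (rblk Rm i)^T = 1%:M.

Definition unique_global_max (A : 'M[R]_(n * d)) p (S : 'M[R]_(n * d, p)) : Prop :=
  [/\ sdp_feasible (S *m S^T),
      (forall X, sdp_feasible X -> X <> S *m S^T -> fip A X < fip A (S *m S^T)),
      \rank (S *m S^T) = d &
      exists Rm : 'M[R]_(n * d, d),
        [/\ P_feasible Rm, Rm *m Rm^T = S *m S^T,
            (forall R', P_feasible R' -> fobj A R' <= fobj A Rm) &
            (forall R', P_feasible R' -> fobj A R' = fobj A Rm ->
                        R' *m R'^T = S *m S^T)]].

End Defs.

(* Main.v *)
Require Import Defs.
From HB Require Import structures.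
From mathcomp Require Import all_boot all_order all_algebra.
From mathcomp Require Import classical_sets reals.
From mathcomp Require Import ring lra zify.
Import Order.TTheory GRing.Theory Num.Theory.
Local Open Scope ring_scope.
Set Implicit Arguments. Unset Strict Implicit. Unset Printing Implicit Defensive.
Section Basic.
Variable R : realType.

Lemma fipE m k (X Y : 'M[R]_(m,k)) : fip X Y = \tr (X^T *m Y).
Proof.
rewrite /fip /mxtrace exchange_big /=; apply: eq_bigr => b _.
by rewrite !mxE; apply: eq_bigr => a _; rewrite mxE.
Qed.

Lemma fipC m k (X Y : 'M[R]_(m,k)) : fip X Y = fip Y X.
Proof. by rewrite /fip; apply: eq_bigr => a _; apply: eq_bigr => b _; rewrite mulrC. Qed.

Lemma fipDl m k (X Y Z : 'M[R]_(m,k)) : fip (X + Y) Z = fip X Z + fip Y Z.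
Proof.
rewrite /fip -big_split; apply: eq_bigr => a _.
by rewrite -big_split; apply: eq_bigr => b _; rewrite mxE mulrDl.
Qed.

Lemma fipZl m k a (X Y : 'M[R]_(m,k)) : fip (a *: X) Y = a * fip X Y.
Proof.
rewrite /fip mulr_sumr; apply: eq_bigr => i _.
by rewrite mulr_sumr; apply: eq_bigr => b _; rewrite mxE mulrA.
Qed.

Lemma fipNl m k (X Y : 'M[R]_(m,k)) : fip (- X) Y = - fip X Y.
Proof. by rewrite -scaleN1r fipZl mulN1r. Qed.

Lemma fipDr m k (X Y Z : 'M[R]_(m,k)) : fip Z (X + Y) = fip Z X + fip Z Y.
Proof. by rewrite fipC fipDl !(fipC Z). Qed.

Lemma fipZr m k a (X Y : 'M[R]_(m,k)) : fip Y (a *: X) = a * fip Y X.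
Proof. by rewrite fipC fipZl fipC. Qed.

Lemma fipNr m k (X Y : 'M[R]_(m,k)) : fip Y (- X) = - fip Y X.
Proof. by rewrite fipC fipNl fipC. Qed.

Lemma fip0l m k (Y : 'M[R]_(m,k)) : fip 0 Y = 0.
Proof. by rewrite -(scale0r (0 : 'M[R]_(m,k))) fipZl mul0r. Qed.

Lemma fip0r m k (Y : 'M[R]_(m,k)) : fip Y 0 = 0.
Proof. by rewrite fipC fip0l. Qed.

Lemma fip_ge0 m k (X : 'M[R]_(m,k)) : 0 <= fip X X.
Proof. by apply: sumr_ge0 => a _; apply: sumr_ge0 => b _; rewrite -expr2 sqr_ge0. Qed.

Lemma fip_eq0 m k (X : 'M[R]_(m,k)) : fip X X = 0 -> X = 0.
Proof.
move=> /eqP; rewrite psumr_eq0; last by move=> a _; apply: sumr_ge0 => b _; rewrite -expr2 sqr_ge0.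
move=> /allP H; apply/matrixP => a b; rewrite mxE.
have := H a (mem_index_enum a); rewrite psumr_eq0; last by move=> c _; rewrite -expr2 sqr_ge0.
by move=> /allP /(_ b (mem_index_enum b)); rewrite -expr2 sqrf_eq0 => /eqP.
Qed.

Lemma fipT m k (X Y : 'M[R]_(m,k)) : fip X^T Y^T = fip X Y.
Proof.
rewrite /fip exchange_big; apply: eq_bigr => a _; apply: eq_bigr => b _.
by rewrite !mxE.
Qed.

Definition frobT m k (X : 'M[R]_(m,k)) : frob X^T = frob X.
Proof. by rewrite /frob fipT. Qed.

Lemma frob_ge0 m k (X : 'M[R]_(m,k)) : 0 <= frob X.
Proof. exact: sqrtr_ge0. Qed.

Lemma frob2 m k (X : 'M[R]_(m,k)) : frob X ^+ 2 = fip X X.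
Proof. by rewrite sqr_sqrtr // fip_ge0. Qed.

Lemma frob_eq0 m k (X : 'M[R]_(m,k)) : frob X = 0 -> X = 0.
Proof. by move=> h; apply: fip_eq0; rewrite -frob2 h expr0n. Qed.

Lemma frob0 m k : frob (0 : 'M[R]_(m,k)) = 0.
Proof. by rewrite /frob fip0l sqrtr0. Qed.

Lemma sq_le_le (u v : R) : 0 <= v -> u ^+ 2 <= v ^+ 2 -> u <= v.
Proof.
move=> v0 h; case: (lerP u 0) => u0; first exact: le_trans u0 v0.
by rewrite -(ler_pXn2r (isT : (0 < 2)%N)) // ?nnegrE // ltW.
Qed.

Lemma CS m k (X Y : 'M[R]_(m,k)) : fip X Y <= frob X * frob Y.
Proof.
set a := frob X; set b := frob Y.
have a0 : 0 <= a by apply: frob_ge0.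
have b0 : 0 <= b by apply: frob_ge0.
have key : 0 <= fip (b *: X - a *: Y) (b *: X - a *: Y) by apply: fip_ge0.
rewrite fipDl !fipDr !fipNl !fipNr !fipZl !fipZr -!frob2 -/a -/b (fipC Y X) in key.
have : a * b * (fip X Y - a * b) <= 0.
  have : 0 <= -2 * (a * b * (fip X Y - a * b)) by move: key; congr (_ <= _); ring.
  by rewrite nmulr_rge0 // oppr_lt0.
case: (ltrP 0 (a * b)) => ab.
  by rewrite pmulr_rle0 // subr_le0.
have : a * b = 0 by apply/eqP; rewrite eq_le ab mulr_ge0.
move=> /eqP; rewrite mulf_eq0 => /orP [] /eqP h _.
  by rewrite h mul0r (frob_eq0 h) fip0l.
by rewrite h mulr0 (frob_eq0 h) fip0r.
Qed.

Lemma CSabs m k (X Y : 'M[R]_(m,k)) : `|fip X Y| <= frob X * frob Y.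
Proof.
rewrite ler_norml CS andbT lerNl -fipNl.
by apply: le_trans (CS _ _) _; rewrite /frob fipNl fipNr opprK.
Qed.

Lemma CS2 m k (X Y : 'M[R]_(m,k)) : fip X Y ^+ 2 <= fip X X * fip Y Y.
Proof.
rewrite -!frob2 -exprMn -[leLHS]real_normK ?num_real //.
rewrite -subr_ge0 subr_sqr mulr_ge0 //.
  by rewrite subr_ge0 CSabs.
by rewrite addr_ge0 // mulr_ge0 // frob_ge0.
Qed.

Lemma frobD m k (X Y : 'M[R]_(m,k)) : frob (X + Y) <= frob X + frob Y.
Proof.
apply: sq_le_le; first by rewrite addr_ge0 // frob_ge0.
rewrite frob2 fipDl !fipDr (fipC Y X) sqrrD -!frob2.
have := CS X Y; lra.
Qed.

End Basic.
Section Op.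
Variable R : realType.

Lemma mulmx_entry m k l (M : 'M[R]_(m,k)) (X : 'M[R]_(k,l)) a c :
  (M *m X) a c = fip (row a M) (col c X)^T.
Proof. by rewrite mxE /fip big_ord1; apply: eq_bigr => b _; rewrite !mxE. Qed.

Lemma frob_mul m k l (M : 'M[R]_(m,k)) (X : 'M[R]_(k,l)) :
  frob (M *m X) <= frob M * frob X.
Proof.
apply: sq_le_le; first by rewrite mulr_ge0 ?frob_ge0.
rewrite exprMn !frob2.
have -> : fip M M * fip X X =
   \sum_a \sum_c fip (row a M) (row a M) * fip (col c X)^T (col c X)^T.
  rewrite /fip mulr_suml; apply: eq_bigr => a _.
  rewrite -mulr_sumr big_ord1; congr (_ * _).
    by apply: eq_bigr => b _; rewrite !mxE.
  rewrite exchange_big; apply: eq_bigr => c _; rewrite big_ord1.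
  by apply: eq_bigr => b _; rewrite !mxE.
rewrite {1}/fip; apply: ler_sum => a _; apply: ler_sum => c _.
by rewrite mulmx_entry -expr2 CS2.
Qed.

Lemma frobZ m k a (X : 'M[R]_(m,k)) : frob (a *: X) = `|a| * frob X.
Proof. by rewrite /frob fipZl fipZr mulrA -expr2 sqrtrM ?sqr_ge0 // sqrtr_sqr. Qed.

Lemma fip_mulT m k l (M : 'M[R]_(m,k)) (y : 'M[R]_(m,l)) (z : 'M[R]_(k,l)) :
  fip (M^T *m y) z = fip y (M *m z).
Proof. by rewrite !fipE trmx_mul trmxK mulmxA. Qed.

Lemma opset_ub m k (M : 'M[R]_(m,k)) :
  has_ubound [set y | exists x : 'cV[R]_k, frob x <= 1 /\ y = frob (M *m x)].
Proof.
exists (frob M) => y [x [x1 ->]].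
apply: le_trans (frob_mul _ _) _.
by rewrite -{2}(mulr1 (frob M)) ler_wpM2l ?frob_ge0.
Qed.

Lemma opnorm_ub m k (M : 'M[R]_(m,k)) (x : 'cV[R]_k) :
  frob x <= 1 -> frob (M *m x) <= opnorm M.
Proof. by move=> x1; apply: (ub_le_sup (opset_ub M)); exists x. Qed.

Lemma opnorm_le m k (M : 'M[R]_(m,k)) c :
  (forall x : 'cV[R]_k, frob x <= 1 -> frob (M *m x) <= c) -> opnorm M <= c.
Proof.
move=> h; apply: ge_sup.
  exists 0, 0; split; first by rewrite frob0.
  by rewrite mulmx0 frob0.
by move=> y [x [x1 ->]]; apply: h.
Qed.

Lemma opnorm_ge0 m k (M : 'M[R]_(m,k)) : 0 <= opnorm M.
Proof. by have := opnorm_ub M (x := 0); rewrite mulmx0 !frob0; apply; apply: ler01. Qed.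

Lemma opnorm_mul m k (M : 'M[R]_(m,k)) (x : 'cV[R]_k) :
  frob (M *m x) <= opnorm M * frob x.
Proof.
have [/frob_eq0 ->|xn0] := eqVneq (frob x) 0.
  by rewrite mulmx0 frob0 frob0 mulr0.
have s0 : 0 < frob x by rewrite lt_def xn0 frob_ge0.
have := opnorm_ub M (x := (frob x)^-1 *: x).
rewrite frobZ -scalemxAr frobZ ger0_norm ?invr_ge0 ?frob_ge0 // mulVf //.
move=> /(_ (lexx _)) h.
have -> : frob (M *m x) = frob x * ((frob x)^-1 * frob (M *m x)).
  by rewrite mulrA mulfV // mul1r.
by rewrite [X in _ <= X]mulrC ler_wpM2l ?frob_ge0.
Qed.

Lemma opnorm_tr m k (M : 'M[R]_(m,k)) (y : 'cV[R]_m) :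
  frob (M^T *m y) <= opnorm M * frob y.
Proof.
set z := M^T *m y.
have [->|zn0] := eqVneq (frob z) 0.
  by rewrite mulr_ge0 ?opnorm_ge0 ?frob_ge0.
have s0 : 0 < frob z by rewrite lt_def zn0 frob_ge0.
have : frob z ^+ 2 <= frob y * (opnorm M * frob z).
  rewrite frob2 {1}/z fip_mulT.
  apply: le_trans (CS _ _) _.
  by rewrite ler_wpM2l ?frob_ge0 ?opnorm_mul.
by rewrite expr2 mulrA (mulrC (frob y)) ler_pM2r.
Qed.

Lemma opnorm_eq0 m k (M : 'M[R]_(m,k)) : opnorm M = 0 -> M = 0.
Proof.
move=> h; apply/matrixP => a b; rewrite mxE.
have := opnorm_mul M (delta_mx b 0 : 'cV[R]_k); rewrite h mul0r.
move=> h2; have : frob (M *m (delta_mx b 0 : 'cV[R]_k)) = 0.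
  by apply/eqP; rewrite eq_le h2 frob_ge0.
move=> /frob_eq0 /matrixP /(_ a 0); rewrite !mxE => <-.
rewrite (bigD1 b) //= big1 ?addr0; last first.
  by move=> i /negbTE ne; rewrite mxE ne mulr0.
by rewrite mxE !eqxx mulr1.
Qed.

End Op.
Section Blocks.
Variable R : realType.
Variables n d : nat.

Definition pr (k : 'I_(n * d)) : 'I_n * 'I_d :=
  enum_val (cast_ord (esym (mxvec_cast n d)) k).

Lemma pr_idx i a : pr (mxvec_index i a) = (i, a).
Proof. by rewrite /pr /mxvec_index cast_ordK enum_rankK. Qed.

Lemma idx_pr k : mxvec_index (pr k).1 (pr k).2 = k.
Proof.
by rewrite /mxvec_index -surjective_pairing /pr enum_valK cast_ordKV.
Qed.

Lemma idx_eq i a j b : (mxvec_index i a == mxvec_index j b :> 'I_(n * d)) = (i == j) && (a == b).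
Proof.
apply/eqP/andP => [h|[/eqP -> /eqP ->] //].
by have := pr_idx i a; rewrite h pr_idx => -[-> ->].
Qed.

Lemma sum_idx (F : 'I_(n * d) -> R) :
  \sum_k F k = \sum_i \sum_a F (mxvec_index i a).
Proof.
rewrite pair_big /= (reindex (fun p : 'I_n * 'I_d => mxvec_index p.1 p.2)) /=.
  by apply: eq_bigr => -[i a].
by exists pr => [[i a] _|k _]; rewrite ?pr_idx ?idx_pr.
Qed.

Definition mkr k (F : 'I_n -> 'M[R]_(d, k)) : 'M[R]_(n * d, k) :=
  \matrix_(kk, b) F (pr kk).1 (pr kk).2 b.

Lemma rblk_mkr k (F : 'I_n -> 'M[R]_(d, k)) i : rblk (mkr F) i = F i.
Proof. by apply/matrixP => a b; rewrite !mxE pr_idx. Qed.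

Definition mkb (F : 'I_n -> 'I_n -> 'M[R]_d) : 'M[R]_(n * d) :=
  \matrix_(k, l) F (pr k).1 (pr l).1 (pr k).2 (pr l).2.

Lemma blk_mkb F i j : blk (mkb F) i j = F i j.
Proof. by apply/matrixP => a b; rewrite !mxE !pr_idx. Qed.

Lemma rblk_ext k (M N : 'M[R]_(n * d, k)) : (forall i, rblk M i = rblk N i) -> M = N.
Proof.
move=> h; apply/matrixP => kk b; rewrite -(idx_pr kk).
by have /matrixP /(_ (pr kk).2 b) := h (pr kk).1; rewrite !mxE.
Qed.

Lemma blk_ext (M N : 'M[R]_(n * d)) : (forall i j, blk M i j = blk N i j) -> M = N.
Proof.
move=> h; apply/matrixP => k l; rewrite -(idx_pr k) -(idx_pr l).
by have /matrixP /(_ (pr k).2 (pr l).2) := h (pr k).1 (pr l).1; rewrite !mxE.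
Qed.

Lemma rblk_mul k (M : 'M[R]_(n * d)) (N : 'M[R]_(n * d, k)) i :
  rblk (M *m N) i = \sum_j blk M i j *m rblk N j.
Proof.
apply/matrixP => a b; rewrite !mxE summxE sum_idx; apply: eq_bigr => j _.
by rewrite mxE; apply: eq_bigr => c _; rewrite !mxE.
Qed.

Lemma rblk_mulr k l (N : 'M[R]_(n * d, k)) (P : 'M[R]_(k, l)) i :
  rblk (N *m P) i = rblk N i *m P.
Proof. by apply/matrixP => a b; rewrite !mxE; apply: eq_bigr => c _; rewrite !mxE. Qed.

Lemma blk_mulT k (N P : 'M[R]_(n * d, k)) i j :
  blk (N *m P^T) i j = rblk N i *m (rblk P j)^T.
Proof. by apply/matrixP => a b; rewrite !mxE; apply: eq_bigr => c _; rewrite !mxE. Qed.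

Lemma blk_tr (M : 'M[R]_(n * d)) i j : blk M^T i j = (blk M j i)^T.
Proof. by apply/matrixP => a b; rewrite !mxE. Qed.

Lemma rblkD k (M N : 'M[R]_(n * d, k)) i : rblk (M + N) i = rblk M i + rblk N i.
Proof. by apply/matrixP => a b; rewrite !mxE. Qed.

Lemma rblkN k (M : 'M[R]_(n * d, k)) i : rblk (- M) i = - rblk M i.
Proof. by apply/matrixP => a b; rewrite !mxE. Qed.

Lemma rblkZ k c (M : 'M[R]_(n * d, k)) i : rblk (c *: M) i = c *: rblk M i.
Proof. by apply/matrixP => a b; rewrite !mxE. Qed.

Lemma blkD (M N : 'M[R]_(n * d)) i j : blk (M + N) i j = blk M i j + blk N i j.
Proof. by apply/matrixP => a b; rewrite !mxE. Qed.

Lemma blkN (M : 'M[R]_(n * d)) i j : blk (- M) i j = - blk M i j.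
Proof. by apply/matrixP => a b; rewrite !mxE. Qed.

Lemma trmul_blk k l (M : 'M[R]_(n * d, k)) (N : 'M[R]_(n * d, l)) :
  M^T *m N = \sum_i (rblk M i)^T *m rblk N i.
Proof.
apply/matrixP => a b; rewrite !mxE summxE sum_idx; apply: eq_bigr => i _.
by rewrite mxE; apply: eq_bigr => c _; rewrite !mxE.
Qed.

Lemma fip_blk (X Y : 'M[R]_(n * d)) :
  fip X Y = \sum_i \sum_j fip (blk X i j) (blk Y i j).
Proof.
rewrite /fip sum_idx; apply: eq_bigr => i _.
rewrite [RHS]exchange_big /=; apply: eq_bigr => a _.
rewrite sum_idx; apply: eq_bigr => j _; apply: eq_bigr => b _.
by rewrite !mxE.
Qed.

Lemma fip_rblk k (X Y : 'M[R]_(n * d, k)) :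
  fip X Y = \sum_i fip (rblk X i) (rblk Y i).
Proof.
rewrite /fip sum_idx; apply: eq_bigr => i _; apply: eq_bigr => a _.
by apply: eq_bigr => b _; rewrite !mxE.
Qed.

Lemma blkrow_mul k (M : 'M[R]_(n * d)) (N : 'M[R]_(n * d, k)) i :
  blkrow M i *m N = \sum_j blk M i j *m rblk N j.
Proof.
rewrite -rblk_mul; apply/matrixP => a b; rewrite !mxE.
by apply: eq_bigr => c _; rewrite !mxE.
Qed.

Lemma rblkZmx i : rblk (Zmx R n d) i = 1%:M.
Proof.
apply/matrixP => a b; rewrite !mxE.
under eq_bigr => j _ do rewrite idx_eq.
rewrite (bigD1 i) //= eqxx /= big1 ?addr0 //.
by move=> j; rewrite eq_sym => /negbTE ->.
Qed.

Lemma Zmx_trmul k (N : 'M[R]_(n * d, k)) : (Zmx R n d)^T *m N = \sum_i rblk N i.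
Proof.
by rewrite trmul_blk; apply: eq_bigr => i _; rewrite rblkZmx trmx1 mul1mx.
Qed.

Lemma blkZZ i j : blk (Zmx R n d *m (Zmx R n d)^T) i j = 1%:M.
Proof. by rewrite blk_mulT !rblkZmx trmx1 mulmx1. Qed.

End Blocks.
Section Chol.
Variable R : realType.

Definition qf m (X : 'M[R]_m) (y : 'cV[R]_m) := fip y (X *m y).

Lemma qfE m (X : 'M[R]_m) y : (y^T *m X *m y) 0 0 = qf X y.
Proof. by rewrite /qf fipE /mxtrace big_ord1 mulmxA. Qed.

Lemma fip_del m (y : 'cV[R]_m) a : fip (delta_mx a 0) y = y a 0.
Proof.
rewrite /fip (bigD1 a) //= big_ord1 big1 ?addr0; last first.
  by move=> c /negbTE ne; rewrite big_ord1 mxE ne mul0r.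
by rewrite mxE !eqxx mul1r.
Qed.

Lemma mul_del m (X : 'M[R]_m) (a b : 'I_m) : (X *m (delta_mx b 0 : 'cV[R]_m)) a 0 = X a b.
Proof.
rewrite mxE (bigD1 b) //= big1 ?addr0; last first.
  by move=> c /negbTE ne; rewrite mxE ne mulr0.
by rewrite mxE !eqxx mulr1.
Qed.

Lemma symE m (X : 'M[R]_m) (a b : 'I_m) : X^T = X -> X a b = X b a.
Proof. by move=> /matrixP /(_ b a); rewrite mxE. Qed.

Lemma fip_symT m (X : 'M[R]_m) (y z : 'cV[R]_m) : X^T = X ->
  fip y (X *m z) = fip z (X *m y).
Proof. by move=> sX; rewrite -fip_mulT sX fipC. Qed.

Lemma qf_shift m (X : 'M[R]_m) (y : 'cV[R]_m) i t : X^T = X ->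
  qf X (y - t *: delta_mx i 0) =
  qf X y - 2 * t * (X *m y) i 0 + t ^+ 2 * X i i.
Proof.
move=> sX; rewrite /qf mulmxDr mulmxN -scalemxAr fipDl !fipDr !fipNl !fipNr.
rewrite !fipZl !fipZr (fip_symT y (delta_mx i 0) sX) !fip_del mul_del.
ring.
Qed.

Lemma tmul_fip m (u y : 'cV[R]_m) : u^T *m y = (fip u y)%:M.
Proof.
by apply/matrixP => a b; rewrite !ord1 !mxE /fip; apply: eq_bigr => c _; rewrite big_ord1 !mxE.
Qed.

Lemma psd_row0 m (X : 'M[R]_m) i : X^T = X -> (forall y, 0 <= qf X y) ->
  X i i = 0 -> forall l, X i l = 0.
Proof.
move=> sX pX Xii l; apply/eqP/negPn/negP => nz.
have := pX (delta_mx l 0 - ((X l l + 1) / (2 * X i l)) *: delta_mx i 0).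
rewrite qf_shift // Xii mulr0 addr0 {1}/qf fip_del !mul_del.
have -> : 2 * ((X l l + 1) / (2 * X i l)) * X i l = X l l + 1.
  by field; rewrite nz.
by rewrite opprD addrA subrr sub0r oppr_ge0 ler10.
Qed.

Lemma chol_step m (X : 'M[R]_m) (k : nat) :
  (forall X : 'M[R]_m, X^T = X -> (forall y, 0 <= qf X y) ->
     (forall a b : 'I_m, (a < k.+1)%N -> X a b = 0) ->
     exists V : 'M[R]_m, X = V *m V^T /\ (forall a b : 'I_m, (b < k.+1)%N -> V a b = 0)) ->
  (k < m)%N -> X^T = X -> (forall y, 0 <= qf X y) ->
  (forall a b : 'I_m, (a < k)%N -> X a b = 0) ->
  exists V : 'M[R]_m, X = V *m V^T /\ (forall a b : 'I_m, (b < k)%N -> V a b = 0).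
Proof.
move=> IH km sX pX z.
pose i := Ordinal km.
pose al := X i i.
pose u : 'cV[R]_m := (Num.sqrt al)^-1 *: (X *m (delta_mx i 0 : 'cV[R]_m)).
have al0 : 0 <= al by have := pX (delta_mx i 0 : 'cV[R]_m); rewrite /qf fip_del mul_del.
have uu : forall a b : 'I_m, u a 0 * u b 0 = X a i * X b i / al.
  move=> a b; rewrite [u a 0]mxE [u b 0]mxE !mul_del.
  have -> : (Num.sqrt al)^-1 * X a i * ((Num.sqrt al)^-1 * X b i)
     = X a i * X b i * ((Num.sqrt al)^-1 ^+ 2) by ring.
  by rewrite exprVn sqr_sqrtr.
pose X' := X - u *m u^T.
have X'E : forall a b : 'I_m, X' a b = X a b - X a i * X b i / al.
  by move=> a b; rewrite !mxE big_ord1 [u^T _ _]mxE uu.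
have sX' : X'^T = X' by rewrite /X' raddfB /= trmx_mul trmxK sX.
have pX' : forall y, 0 <= qf X' y.
  move=> y; set be := (X *m y) i 0.
  have := pX (y - (be / al) *: delta_mx i 0); rewrite qf_shift //.
  have -> : qf X' y = qf X y - be ^+ 2 / al.
    rewrite /qf /X' mulmxBl fipDr fipNr -mulmxA tmul_fip mul_mx_scalar fipZr (fipC y u).
    have -> : fip u y = (Num.sqrt al)^-1 * be.
      by rewrite fipZl fipC (fip_symT _ _ sX) fip_del.
    have -> : (Num.sqrt al)^-1 * be * ((Num.sqrt al)^-1 * be) = be ^+ 2 * ((Num.sqrt al)^-1 ^+ 2) by ring.
    by rewrite exprVn sqr_sqrtr.
  congr (0 <= _); rewrite -/al.
  have [->|aln0] := eqVneq al 0; first by rewrite !invr0 !mulr0; ring.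
  rewrite -/be; field; exact: aln0.

have z' : forall a b : 'I_m, (a < k.+1)%N -> X' a b = 0.
  move=> a b; rewrite ltnS leq_eqVlt => /orP [/eqP ak| ak]; last first.
    by rewrite X'E (z a b ak) (z a i ak) !mul0r subr0.
  have -> : a = i by apply: val_inj.
  rewrite X'E.
  have [al0'|aln0] := eqVneq al 0.
    by rewrite (psd_row0 sX pX al0') -/al al0' invr0 !mulr0 subr0.
  by rewrite (symE _ _ sX) -/al mulrAC divff // mul1r subrr.
have [V' [X'V V'z]] := IH X' sX' pX' z'.
have V'e : V' *m (delta_mx i 0 : 'cV[R]_m) = 0.
  by apply/matrixP => a b; rewrite ord1 mul_del mxE V'z.
have ee : (delta_mx 0 i : 'rV[R]_m) *m (delta_mx i 0 : 'cV[R]_m) = 1.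
  by rewrite mul_delta_mx; apply/matrixP => a b; rewrite !ord1 !mxE.
exists (V' + u *m (delta_mx 0 i : 'rV[R]_m)); split.
  have -> : X = X' + u *m u^T by rewrite /X' subrK.
  rewrite X'V raddfD /= trmx_mul trmx_delta mulmxDl !mulmxDr.
  rewrite !mulmxA V'e mul0mx addr0 -(mulmxA u) -(trmxK (delta_mx 0 i)) -trmx_mul trmx_delta V'e.
  by rewrite trmx0 mulmx0 add0r trmx_delta -(mulmxA u) ee mulmx1.
move=> a b bk; rewrite !mxE V'z ?(ltn_trans bk) // add0r big_ord1 !mxE.
have -> : (b == i) = false.
  by apply/negbTE; apply/eqP => bi; move: bk; rewrite bi /= ltnn.
by rewrite andbF mulr0.
Qed.

Lemma chol m (X : 'M[R]_m) : X^T = X -> (forall y, 0 <= qf X y) ->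
  exists V : 'M[R]_m, X = V *m V^T.
Proof.
suff H : forall j (X : 'M[R]_m), X^T = X -> (forall y, 0 <= qf X y) ->
   (forall a b : 'I_m, (a < m - j)%N -> X a b = 0) ->
   exists V : 'M[R]_m, X = V *m V^T /\ (forall a b : 'I_m, (b < m - j)%N -> V a b = 0).
  move=> sX pX; have [|V [XV _]] := H m X sX pX; first by move=> a b; rewrite subnn.
  by exists V.
elim=> [|j IH] {}X sX pX z.
  exists 0; split; last by move=> a b _; rewrite mxE.
  by rewrite mul0mx; apply/matrixP => a b; rewrite mxE z // subn0.
have [jm|mj] := ltnP j m.
  have e : (m - j)%N = (m - j.+1).+1 by rewrite subnS prednK // subn_gt0.
  apply: chol_step => //.
  - by move=> Y sY pY zY; rewrite -e; apply: IH => // a b; rewrite e; apply: zY.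
  - lia.
have e1 : (m - j.+1 = 0)%N by apply/eqP; rewrite subn_eq0 (leq_trans mj).
have e0 : (m - j = 0)%N by apply/eqP; rewrite subn_eq0.
rewrite e1; rewrite e0 in IH; apply: IH => // a b; rewrite e1.
Qed.

End Chol.
Section Eig.
Variable R : realType.
Local Open Scope classical_set_scope.

Lemma qf_add m (B : 'M[R]_m) (x y : 'cV[R]_m) t : B^T = B ->
  qf B (x + t *: y) = qf B x + 2 * t * fip y (B *m x) + t ^+ 2 * qf B y.
Proof.
move=> sB; rewrite /qf mulmxDr -scalemxAr fipDl !fipDr !fipZl !fipZr.
rewrite (fip_symT x y sB); ring.
Qed.

Lemma qf_scale m (B : 'M[R]_m) (x : 'cV[R]_m) t : qf B (t *: x) = t ^+ 2 * qf B x.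
Proof. by rewrite /qf -scalemxAr fipZl fipZr mulrA expr2. Qed.

Lemma frob1 m (x : 'cV[R]_m) : fip x x = 1 -> frob x = 1.
Proof. by rewrite /frob => ->; rewrite sqrtr1. Qed.

Lemma unit_scale m (y : 'cV[R]_m) : y != 0 ->
  fip ((frob y)^-1 *: y) ((frob y)^-1 *: y) = 1 /\ 0 < frob y.
Proof.
move=> yn0.
have s0 : 0 < frob y.
  rewrite lt_def frob_ge0 andbT; apply/eqP => /frob_eq0 y0; by rewrite y0 eqxx in yn0.
split=> //; rewrite fipZl fipZr -frob2 mulrA -expr2 -exprMn mulVf //.
  by rewrite expr1n.
by rewrite gt_eqF.
Qed.

Lemma eig_lb m (L : 'M[R]_m) c : L^T = L -> (forall u : 'cV[R]_m, 0 <= qf L u) ->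
  (forall x : 'cV[R]_m, c * frob x <= frob (L *m x)) -> forall u : 'cV[R]_m, c * fip u u <= qf L u.
Proof.
move=> sL pL hc u.
have [c0|c0] := lerP c 0.
  by apply: le_trans (pL u); rewrite mulr_le0_ge0 ?fip_ge0.
have [->|un0] := eqVneq u 0; first by rewrite fip0l /qf fip0l mulr0.
pose E := [set y | exists x : 'cV[R]_m, fip x x = 1 /\ y = qf L x].
have [u1 s0] := unit_scale un0.
have E0 : E !=set0 by exists (qf L ((frob u)^-1 *: u)), ((frob u)^-1 *: u).
have Elb : has_lbound E by exists 0 => y [x [_ ->]].
have hinf : has_inf E by [].
pose lam := inf E.
have lam_lb : forall x, fip x x = 1 -> lam <= qf L x.
  by move=> x x1; apply: (ge_inf Elb); exists x.
have lam0 : 0 <= lam by apply: lb_le_inf => // y [x [_ ->]].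
have lamq : forall y, lam * fip y y <= qf L y.
  move=> y; have [->|yn0] := eqVneq y 0; first by rewrite fip0l /qf fip0l mulr0.
  have [y1 t0] := unit_scale yn0.
  have := lam_lb _ y1; rewrite qf_scale -frob2 exprVn.
  by rewrite ler_pdivlMl ?exprn_gt0 // mulrC.
suff clam : c <= lam.
  by apply: le_trans (lamq u); rewrite ler_wpM2r ?fip_ge0.
pose B := L - lam%:M.
have sB : B^T = B by rewrite /B raddfB /= sL tr_scalar_mx.
have qB : forall y, qf B y = qf L y - lam * fip y y.
  by move=> y; rewrite /qf /B mulmxBl fipDr fipNr mul_scalar_mx fipZr.
have pB : forall y, 0 <= qf B y by move=> y; rewrite qB subr_ge0.
pose K := frob L + 1.
have K0 : 0 < K by rewrite /K ltr_pwDr ?frob_ge0.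
have KB : forall y, qf B y <= K * fip y y.
  move=> y; rewrite qB; apply: le_trans (_ : qf L y <= _).
    by rewrite lerBlDr lerDl mulr_ge0 ?fip_ge0.
  apply: le_trans (CS _ _) _; apply: le_trans (ler_wpM2l (frob_ge0 _) (frob_mul _ _)) _.
  rewrite -frob2 /K mulrC -mulrA -expr2 ler_wpM2r ?sqr_ge0 //.
  by rewrite lerDl.
have Bx2 : forall x, fip (B *m x) (B *m x) <= K * qf B x.
  move=> x; set y := B *m x.
  have := pB (x + (- K^-1) *: y); rewrite qf_add //.
  have -> : fip y (B *m x) = fip y y by [].
  move=> h; have : 0 <= qf B x - K^-1 * fip y y.
    apply: le_trans h _; rewrite -addrA lerD2l.
    have : K^-2 * qf B y <= K^-2 * (K * fip y y) by rewrite ler_wpM2l ?KB // invr_ge0 exprn_ge0 // ltW.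
    have -> : (- K^-1) ^+ 2 = K^-2 by rewrite sqrrN exprVn.
    move=> h2; apply: le_trans (lerD (lexx _) h2) _.
    have -> : K^-2 * (K * fip y y) = K^-1 * fip y y.
      by field; rewrite gt_eqF.
    have -> : 2 * - K^-1 * fip y y + K^-1 * fip y y = - (K^-1 * fip y y) by ring.
    by [].
  by rewrite subr_ge0 -ler_pdivrMl // mulrC.
apply/ler_addgt0Pr => eta eta0.
have eps0 : 0 < eta ^+ 2 / K by rewrite divr_gt0 // exprn_gt0.
have [y [x [x1 ->]] hx] := inf_adherent eps0 hinf.
have qBx : qf B x < eta ^+ 2 / K by rewrite qB x1 mulr1 ltrBlDl.
have fB : frob (B *m x) <= eta.
  apply: sq_le_le; first exact: ltW.
  rewrite frob2; apply: le_trans (Bx2 x) _.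
  by rewrite -ler_pdivlMl // mulrC ltW.
have Lx : L *m x = lam *: x + B *m x.
  by rewrite /B mulmxBl mul_scalar_mx addrC subrK.
have := hc x; rewrite (frob1 x1) mulr1 Lx => h.
apply: le_trans h _; apply: le_trans (frobD _ _) _.
by rewrite frobZ (frob1 x1) mulr1 ger0_norm // lerD2l.
Qed.

End Eig.
Section Main.
Variable R : realType.
Variables n d p : nat.
Variable Delta : 'M[R]_(n * d).
Variable S : 'M[R]_(n * d, p).
Hypothesis n1 : (1 <= n)%N.
Hypothesis d1 : (1 <= d)%N.
Hypothesis dp : (d < p)%N.
Hypothesis sD : Delta^T = Delta.
Hypothesis D0 : forall i, blk Delta i i = 0.
Hypothesis soc : second_order_critical (Amx Delta) S.

Local Notation A := (Amx Delta).
Local Notation Sb i := (rblk S i).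
Local Notation Lm i := (Lam A S i).
Local Notation Zm := (Zmx R n d).

Definition Ei i := \sum_(j < n | j != i) blk Delta i j *m rblk S j.
Definition Tm := \sum_(j < n) rblk S j.

Lemma stS i : Sb i *m (Sb i)^T = 1%:M.
Proof. by case: soc => h _; apply: h. Qed.

Lemma sA : A^T = A.
Proof. by rewrite /Amx raddfD /= trmx_mul trmxK sD. Qed.

Lemma blkA i j : blk A i j = 1%:M + blk Delta i j.
Proof. by rewrite /Amx blkD blkZZ. Qed.

Lemma blkAii i : blk A i i = 1%:M.
Proof. by rewrite blkA D0 addr0. Qed.

Lemma blkAT i j : (blk A i j)^T = blk A j i.
Proof. by rewrite -blk_tr sA. Qed.

Lemma Ei_full i : Ei i = \sum_j blk Delta i j *m rblk S j.
Proof. by rewrite [RHS](bigD1 i) //= D0 mul0mx add0r. Qed.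

Lemma Gdec i : \sum_j blk A i j *m Sb j = Tm + Ei i.
Proof.
rewrite Ei_full /Tm -big_split /=; apply: eq_bigr => j _.
by rewrite blkA mulmxDl mul1mx.
Qed.

Lemma crit i : \sum_j blk A i j *m Sb j = Lm i *m Sb i.
Proof. by case: soc => _ [h _]; apply: h. Qed.

Lemma LmT i : (Lm i)^T = Lm i.
Proof.
rewrite /Lam linearZ /= raddf_sum /=; congr (_ *: _); apply: eq_bigr => j _.
rewrite raddfD /= !trmx_mul !trmxK blkAT addrC !mulmxA.
by rewrite (blkAT i j).
Qed.

Lemma fip_uu m (X : 'M[R]_m) (u : 'cV[R]_m) : fip X (u *m u^T) = fip u (X *m u).
Proof.
rewrite !fipE mulmxA mxtrace_mulC mulmxA -mxtrace_tr !trmx_mul !trmxK.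
by [].
Qed.

Lemma ker_vec (M : 'M[R]_(d, p)) : exists2 w : 'cV[R]_p, w != 0 & M *m w = 0.
Proof.
set K := kermx M^T.
have rk : (0 < \rank K)%N.
  rewrite /K mxrank_ker subn_gt0; apply: leq_ltn_trans dp; exact: rank_leq_col.
have Kn0 : K != 0 by apply/eqP => h; move: rk; rewrite h mxrank0.
have /existsP [k hk] : [exists k, row k K != 0].
  rewrite -negb_forall; apply: contra Kn0 => /forallP h.
  by apply/eqP/row_matrixP => k; rewrite row0; apply/eqP/h.
exists (row k K)^T; first by rewrite trmx_eq0.
by rewrite -[M]trmxK -trmx_mul -row_mul mulmx_ker row0 trmx0.
Qed.

Lemma frob_ST i (y : 'cV[R]_d) : frob ((Sb i)^T *m y) = frob y.
Proof. by rewrite /frob fip_mulT mulmxA stS mul1mx. Qed.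

Lemma LmG i (x : 'cV[R]_d) :
  frob (Lm i *m x) = frob ((Tm + Ei i)^T *m x).
Proof. by rewrite -Gdec crit trmx_mul -mulmxA LmT frob_ST. Qed.

Lemma fip_uw m q (X : 'M[R]_m) (u : 'cV[R]_m) (w : 'cV[R]_q) :
  fip X (u *m w^T *m (u *m w^T)^T) = fip w w * fip u (X *m u).
Proof.
have -> : u *m w^T *m (u *m w^T)^T = fip w w *: (u *m u^T).
  rewrite trmx_mul trmxK mulmxA -(mulmxA u) -{1}(trmxK w) tmul_fip.
  by rewrite mul_mx_scalar -scalemxAl trmxK.
by rewrite fipZr fip_uu.
Qed.

Lemma Lm_psd i (u : 'cV[R]_d) : fip u u <= qf (Lm i) u.
Proof.
have [w wn0 Sw] := ker_vec (Sb i).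
pose F := fun j : 'I_n => if j == i then u *m w^T else 0.
pose Sd := mkr F.
have tang : forall j, tangent (rblk S j) (rblk Sd j).
  move=> j; rewrite /tangent rblk_mkr /F; case: eqP => [->|_].
    rewrite trmx_mul trmxK mulmxA Sw mul0mx add0r -mulmxA -trmx_mul Sw.
    by rewrite trmx0 mulmx0.
  by rewrite trmx0 mulmx0 mul0mx addr0; apply/matrixP => a b; rewrite !mxE.
case: soc => _ [_ /(_ Sd tang)].
have Sdi : forall j, rblk Sd j = F j by move=> j; rewrite rblk_mkr.
rewrite (bigD1 i) //= (bigD1 i) //= big1; last first.
  by move=> j /negbTE ji; rewrite !Sdi /F ji trmx0 mulmx0 fip0r.
rewrite big1; last first.
  move=> i' /negbTE ii; rewrite big1 // => j _.
  by rewrite Sdi /F ii mul0mx fip0r.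
rewrite (bigD1 i) //= big1; last first.
  by move=> j /negbTE ji; rewrite Sdi /F ji mul0mx fip0r.
rewrite !addr0 Sdi /F eqxx blkAii.
rewrite !fip_uw mul1mx.
have w0 : 0 < fip w w.
  rewrite lt_def fip_ge0 andbT; apply: contra wn0 => /eqP h.
  by apply/eqP; apply: fip_eq0.
by rewrite ler_pM2l.
Qed.

Local Open Scope classical_set_scope.

Lemma fip_suml m k (F : 'I_n -> 'M[R]_(m, k)) Y :
  fip (\sum_j F j) Y = \sum_j fip (F j) Y.
Proof.
by apply: (big_morph (fun X => fip X Y)) => [X Z|]; [exact: fipDl | exact: fip0l].
Qed.

Lemma Q0ex : exists Q : 'M[R]_(d, p), Q *m Q^T = 1%:M.
Proof.
exists (\matrix_(a, b) ((a : nat) == b)%:R).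
apply/matrixP => a b; rewrite !mxE (bigD1 (widen_ord (ltnW dp) a)) //= big1.
  by rewrite !mxE /= eqxx mul1r addr0 eq_sym.
move=> c cn; rewrite !mxE.
have -> : ((a : nat) == c) = false.
  by apply/negbTE; apply: contra cn => /eqP h; apply/eqP/val_inj.
by rewrite mul0r.
Qed.

Definition DS := [set y | exists Q : 'M[R]_(d, p), Q *m Q^T = 1%:M /\ y = Num.sqrt (\sum_(i < n) frob (rblk S i - Q) ^+ 2)].

Lemma DS0 : DS !=set0.
Proof. by have [Q hQ] := Q0ex; eexists; exists Q; split. Qed.

Lemma DSlb : has_lbound DS.
Proof. by exists 0 => y [Q [_ ->]]; apply: sqrtr_ge0. Qed.

Lemma dF_ge0 : 0 <= dF S.
Proof. by apply: lb_le_inf; [exact: DS0 | move=> y [Q [_ ->]]; apply: sqrtr_ge0]. Qed.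

Lemma exQ r : dF S < r -> exists Q : 'M[R]_(d, p), Q *m Q^T = 1%:M /\ \sum_i fip (Sb i - Q) (Sb i - Q) < r ^+ 2.
Proof.
move=> hr.
have e0 : 0 < r - dF S by rewrite subr_gt0.
have [e [Q [QQ ->]] he] := inf_adherent e0 (conj DS0 DSlb).
exists Q; split => //.
move: he; rewrite /dF -/DS addrC subrK => he.
have s0 : 0 <= \sum_(i < n) frob (rblk S i - Q) ^+ 2 by apply: sumr_ge0 => i _; apply: sqr_ge0.
have <- : \sum_(i < n) frob (rblk S i - Q) ^+ 2 = \sum_i fip (Sb i - Q) (Sb i - Q).
  by apply: eq_bigr => i _; rewrite frob2.
rewrite -(sqr_sqrtr s0) !expr2; apply: ltr_pM => //; exact: sqrtr_ge0.
Qed.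

Lemma frob_sq_le m k (M : 'M[R]_(m, k)) (x : 'M[R]_(k, 1)) :
  fip (M *m x) (M *m x) <= fip M M * fip x x.
Proof.
rewrite -!frob2 -exprMn !expr2; apply: ler_pM; rewrite ?frob_ge0 //; exact: frob_mul.
Qed.

Lemma Tbound r (Q : 'M[R]_(d, p)) : Q *m Q^T = 1%:M ->
  \sum_i fip (Sb i - Q) (Sb i - Q) <= r ^+ 2 ->
  forall x : 'cV[R]_d, (n%:R - r ^+ 2 / 2) * frob x <= frob (Tm^T *m x).
Proof.
move=> QQ hQ x.
set F := fip x x.
have ha : forall j, fip ((Sb j)^T *m x) ((Sb j)^T *m x) = F.
  by move=> j; rewrite fip_mulT mulmxA stS mul1mx.
have hq : fip (Q^T *m x) (Q^T *m x) = F by rewrite fip_mulT mulmxA QQ mul1mx.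
have hs : \sum_j fip ((Sb j)^T *m x - Q^T *m x) ((Sb j)^T *m x - Q^T *m x) <= r ^+ 2 * F.
  have h1 : \sum_j fip ((Sb j)^T *m x - Q^T *m x) ((Sb j)^T *m x - Q^T *m x)
     <= \sum_j fip (Sb j - Q) (Sb j - Q) * F.
    apply: ler_sum => j _; rewrite -mulmxBl -raddfB /=.
    by apply: le_trans (frob_sq_le _ _) _; rewrite fipT.
  apply: le_trans h1 _.
  by rewrite -mulr_suml ler_wpM2r // fip_ge0.
have he : \sum_j fip ((Sb j)^T *m x - Q^T *m x) ((Sb j)^T *m x - Q^T *m x)
   = (2 * n%:R) * F - 2 * fip (Tm^T *m x) (Q^T *m x).
  have -> : Tm^T *m x = \sum_j (Sb j)^T *m x.
    by rewrite /Tm raddf_sum /= mulmx_suml.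
  have -> : (2 * n%:R) * F = \sum_(j < n) (2 * F).
    by rewrite sumr_const card_ord -mulr_natr; ring.
  rewrite fip_suml [X in _ - X]mulr_sumr -sumrB.
  apply: eq_bigr => j _.
  rewrite fipDl !fipDr !fipNl !fipNr ha hq (fipC (Q^T *m x)); ring.
rewrite he in hs.
have hc : fip (Tm^T *m x) (Q^T *m x) <= frob (Tm^T *m x) * frob x.
  apply: le_trans (CS _ _) _; rewrite /frob hq.
  by [].
have [fx0|fxp] := eqVneq (frob x) 0.
  by rewrite fx0 mulr0 frob_ge0.
have fx : 0 < frob x by rewrite lt_def fxp frob_ge0.
have F2 : F = frob x * frob x by rewrite -expr2 frob2.
rewrite F2 in hs.
have ft := frob_ge0 (Tm^T *m x).
nra.
Qed.

Definition Mx := \big[Num.max/0]_(i < n) opnorm (Ei i).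

Lemma Mx_ge i : opnorm (Ei i) <= Mx.
Proof. exact: le_bigmax. Qed.

Lemma Mx_ge0 : 0 <= Mx.
Proof. exact: le_trans (opnorm_ge0 _) (Mx_ge (Ordinal n1)). Qed.

Lemma frobN m k (X : 'M[R]_(m, k)) : frob (- X) = frob X.
Proof. by rewrite /frob fipNl fipNr opprK. Qed.

Definition Lmx := mkb (fun i j => if i == j then Lm i else 0).
Definition Bm := Lmx - A.

Lemma Lmx_T : Lmx^T = Lmx.
Proof.
apply: blk_ext => i j; rewrite blk_tr !blk_mkb eq_sym.
by case: eqP => [->|_]; rewrite ?LmT ?trmx0.
Qed.

Lemma Bm_T : Bm^T = Bm.
Proof. by rewrite /Bm raddfB /= Lmx_T sA. Qed.

Lemma rblk_Lmx k (N : 'M[R]_(n * d, k)) i : rblk (Lmx *m N) i = Lm i *m rblk N i.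
Proof.
rewrite rblk_mul (bigD1 i) //= big1 ?addr0; first by rewrite blk_mkb eqxx.
by move=> j /negbTE ji; rewrite blk_mkb eq_sym ji mul0mx.
Qed.

Lemma BS : Bm *m S = 0.
Proof.
apply: rblk_ext => i; rewrite /Bm mulmxBl rblkD rblkN rblk_Lmx rblk_mul crit subrr.
by apply/matrixP => a b; rewrite !mxE.
Qed.

Lemma qf_Lmx v : qf Lmx v = \sum_i qf (Lm i) (rblk v i).
Proof. by rewrite /qf fip_rblk; apply: eq_bigr => i _; rewrite rblk_Lmx. Qed.

Lemma qf_Bm v : qf Bm v = qf Lmx v - qf A v.
Proof. by rewrite /qf /Bm mulmxBl fipDr fipNr. Qed.

Lemma qf_A_le (v : 'cV[R]_(n * d)) : Zm^T *m v = 0 -> qf A v <= opnorm Delta * fip v v.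
Proof.
move=> Zv; rewrite /qf /Amx mulmxDl fipDr -mulmxA -fip_mulT Zv fip0l add0r.
apply: le_trans (CS _ _) _; rewrite -frob2 expr2 mulrA [opnorm Delta * frob v]mulrC -mulrA.
by rewrite ler_wpM2l ?frob_ge0 ?opnorm_mul.
Qed.

Lemma qf_shiftS v (w : 'cV[R]_p) : qf Bm (v + S *m w) = qf Bm v.
Proof.
rewrite /qf mulmxDr mulmxA BS mul0mx addr0 fipDl.
by rewrite -(fip_mulT Bm (S *m w) v) Bm_T mulmxA BS mul0mx fip0l addr0.
Qed.

Lemma mul_del2 m k (M : 'M[R]_(m, k)) (a : 'I_m) (b : 'I_k) :
  (M *m (delta_mx b 0 : 'cV[R]_k)) a 0 = M a b.
Proof.
rewrite mxE (bigD1 b) //= big1 ?addr0; last first.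
  by move=> c /negbTE ne; rewrite mxE ne mulr0.
by rewrite mxE !eqxx mulr1.
Qed.

Lemma colext m k (M N : 'M[R]_(m, k)) : (forall w : 'cV[R]_k, M *m w = N *m w) -> M = N.
Proof.
move=> h; apply/matrixP => a b.
by rewrite -mul_del2 h mul_del2.
Qed.

Section WithQ.
Variable r : R.
Variable Q : 'M[R]_(d, p).
Hypothesis QQ : Q *m Q^T = 1%:M.
Hypothesis hQ : \sum_i fip (Sb i - Q) (Sb i - Q) <= r ^+ 2.
Hypothesis pos : 0 < n%:R - r ^+ 2 / 2 - Mx - opnorm Delta.

Local Notation eps := (n%:R - r ^+ 2 / 2 - Mx - opnorm Delta).

Lemma Lm_lb i (u : 'cV[R]_d) : (n%:R - r ^+ 2 / 2 - Mx) * fip u u <= qf (Lm i) u.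
Proof.
apply: eig_lb; first exact: LmT.
  by move=> y; apply: le_trans (Lm_psd i y); apply: fip_ge0.
move=> x; rewrite LmG raddfD /= mulmxDl.
set a := Tm^T *m x; set b := (Ei i)^T *m x.
have h1 : frob a <= frob (a + b) + frob b.
  by rewrite -(frobN b); apply: le_trans (frobD _ _); rewrite addrK.
have h2 : frob b <= Mx * frob x.
  apply: le_trans (opnorm_tr _ _) _; rewrite ler_wpM2r ?frob_ge0 //; exact: Mx_ge.
have h3 := Tbound QQ hQ x.
rewrite -/a in h3.
have : (n%:R - r ^+ 2 / 2 - Mx) * frob x = (n%:R - r ^+ 2 / 2) * frob x - Mx * frob x by ring.
move=> ->; lra.
Qed.

Lemma coer0 (v : 'cV[R]_(n * d)) : Zm^T *m v = 0 -> eps * fip v v <= qf Bm v.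
Proof.
move=> Zv; rewrite qf_Bm qf_Lmx.
have hA := qf_A_le Zv.
have hL : (n%:R - r ^+ 2 / 2 - Mx) * fip v v <= \sum_i qf (Lm i) (rblk v i).
  rewrite fip_rblk mulr_sumr; apply: ler_sum => i _; exact: Lm_lb.
have : eps * fip v v = (n%:R - r ^+ 2 / 2 - Mx) * fip v v - opnorm Delta * fip v v by ring.
move=> ->; lra.
Qed.

Lemma cpos : 0 < n%:R - r ^+ 2 / 2.
Proof.
apply: (lt_le_trans pos); rewrite -addrA gerDl -opprD oppr_le0 addr_ge0 //.
  exact: Mx_ge0.
exact: opnorm_ge0.
Qed.

Lemma TTunit : (Tm *m Tm^T) \in unitmx.
Proof.
rewrite unitmxE unitfE; apply/negP => /det0P [v vn0 vT].
have Tx : Tm *m Tm^T *m v^T = 0.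
  have sy : (Tm *m Tm^T)^T = Tm *m Tm^T by rewrite trmx_mul trmxK.
  by rewrite -{1}sy -trmx_mul vT trmx0.
have f0 : frob (Tm^T *m v^T) = 0.
  by rewrite /frob fip_mulT mulmxA Tx fip0r sqrtr0.
have := Tbound QQ hQ v^T; rewrite f0 pmulr_rle0 ?cpos // => h.
have : frob v^T = 0 by apply/eqP; rewrite eq_le h frob_ge0.
by move=> /frob_eq0 /eqP; rewrite trmx_eq0 (negbTE vn0).
Qed.

Definition Km := S *m Tm^T *m invmx (Tm *m Tm^T).

Lemma ZS : Zm^T *m S = Tm.
Proof. by rewrite Zmx_trmul. Qed.

Lemma coer (v : 'cV[R]_(n * d)) :
  eps * fip (v - Km *m (Zm^T *m v)) (v - Km *m (Zm^T *m v)) <= qf Bm v.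
Proof.
pose w := - (Tm^T *m invmx (Tm *m Tm^T) *m (Zm^T *m v)).
have e : v - Km *m (Zm^T *m v) = v + S *m w by rewrite /w /Km mulmxN !mulmxA.
rewrite e -(qf_shiftS v w); apply: coer0.
rewrite mulmxDr /w !mulmxN !mulmxA ZS.
by rewrite mulmxV ?TTunit // mul1mx subrr.
Qed.

Lemma SKT : S = Km *m Tm.
Proof.
apply: colext => w.
have := coer (S *m w); rewrite -(add0r (S *m w)) qf_shiftS /qf mulmx0 fip0r add0r.
rewrite pmulr_rle0 // => h.
have : fip (S *m w - Km *m (Zm^T *m (S *m w))) (S *m w - Km *m (Zm^T *m (S *m w))) = 0.
  by apply/eqP; rewrite eq_le h fip_ge0.
move=> /fip_eq0 /eqP; rewrite subr_eq0 => /eqP ->.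
by rewrite !mulmxA -(mulmxA _ _ S) ZS.
Qed.

Lemma fip_cols m k (M N : 'M[R]_(m, k)) :
  fip M N = \sum_c fip (col c M) (col c N).
Proof.
rewrite /fip exchange_big; apply: eq_bigr => c _; apply: eq_bigr => a _.
by rewrite big_ord1 !mxE.
Qed.

Lemma col_mulr m k l (M : 'M[R]_(m, k)) (N : 'M[R]_(k, l)) c :
  col c (M *m N) = M *m col c N.
Proof. by rewrite !colE mulmxA. Qed.

Lemma fip_psdB (V : 'M[R]_(n * d)) :
  fip Bm (V *m V^T) = \sum_c qf Bm (col c V).
Proof.
rewrite fipE mulmxA mxtrace_mulC mulmxA Bm_T -mulmxA -fipE fip_cols.
by apply: eq_bigr => c _; rewrite col_mulr.
Qed.

Lemma qfB_ge0 v : 0 <= qf Bm v.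
Proof. by apply: le_trans (coer v); rewrite mulr_ge0 ?fip_ge0 // ltW. Qed.

Lemma AeL : A = Lmx - Bm.
Proof. by rewrite /Bm opprB addrC subrK. Qed.

Lemma fipLmx X : (forall i, blk X i i = 1%:M) -> fip Lmx X = \sum_i fip (Lm i) 1%:M.
Proof.
move=> hX; rewrite fip_blk; apply: eq_bigr => i _.
rewrite (bigD1 i) //= big1 ?addr0; first by rewrite blk_mkb eqxx hX.
by move=> j /negbTE ji; rewrite blk_mkb eq_sym ji fip0l.
Qed.

Lemma blkSS i j : blk (S *m S^T) i j = Sb i *m (Sb j)^T.
Proof. exact: blk_mulT. Qed.

Lemma feasSS : sdp_feasible (S *m S^T).
Proof.
split; last by move=> i; rewrite blkSS stS.
split; first by rewrite trmx_mul trmxK.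
move=> x; rewrite qfE /qf -mulmxA -fip_mulT; exact: fip_ge0.
Qed.

Lemma fipB_SS : fip Bm (S *m S^T) = 0.
Proof. by rewrite fipE Bm_T mulmxA BS mul0mx mxtrace0. Qed.

Lemma fipA_SS : fip A (S *m S^T) = \sum_i fip (Lm i) 1%:M.
Proof.
rewrite {1}AeL fipDl fipNl fipB_SS subr0 fipLmx // => i.
by rewrite blkSS stS.
Qed.

Lemma fipA_X X : sdp_feasible X ->
  exists V : 'M[R]_(n * d), X = V *m V^T /\
    fip A X = \sum_i fip (Lm i) 1%:M - \sum_c qf Bm (col c V).
Proof.
move=> [[sX pX] bX].
have [V XV] : exists V : 'M[R]_(n * d), X = V *m V^T.
  by apply: chol => // y; rewrite -qfE; apply: pX.
exists V; split => //.
by rewrite {1}AeL fipDl fipNl fipLmx // XV fip_psdB.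
Qed.

Definition Esel i : 'M[R]_(n * d, d) := mkr (fun j => if j == i then 1%:M else 0).

Lemma blk_sel (M : 'M[R]_(n * d)) i j : blk M i j = (Esel i)^T *m M *m Esel j.
Proof.
rewrite -mulmxA trmul_blk (bigD1 i) //= big1 ?addr0; last first.
  by move=> k /negbTE ki; rewrite rblk_mkr ki trmx0 mul0mx.
rewrite rblk_mkr eqxx trmx1 mul1mx rblk_mul (bigD1 j) //= big1 ?addr0.
  by rewrite rblk_mkr eqxx mulmx1.
by move=> k /negbTE kj; rewrite rblk_mkr kj mulmx0.
Qed.

Lemma unique X : sdp_feasible X -> fip A (S *m S^T) <= fip A X -> X = S *m S^T.
Proof.
move=> fX; have [V [XV fA]] := fipA_X fX; rewrite fA fipA_SS => h.
have s0 : \sum_c qf Bm (col c V) = 0.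
  apply/eqP; rewrite eq_le sumr_ge0 ?andbT; last by move=> c _; apply: qfB_ge0.
  by move: h; rewrite lerDl oppr_ge0.
have q0 : forall c, qf Bm (col c V) = 0.
  by move=> c; apply: (psumr_eq0P _ s0) => // c' _; apply: qfB_ge0.
have VKV : V = Km *m (Zm^T *m V).
  apply/matrixP => a c.
  have := coer (col c V); rewrite q0 pmulr_rle0 // => hc.
  have : fip (col c V - Km *m (Zm^T *m col c V)) (col c V - Km *m (Zm^T *m col c V)) = 0.
    by apply/eqP; rewrite eq_le hc fip_ge0.
  move=> /fip_eq0 /eqP; rewrite subr_eq0 => /eqP /matrixP /(_ a 0).
  by rewrite -!col_mulr !mxE.
pose W := Zm^T *m X *m Zm.
have XW : X = Km *m W *m Km^T.
  set U := Zm^T *m V.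
  have e1 : Zm^T *m (V *m V^T) *m Zm = U *m U^T by rewrite /U trmx_mul trmxK !mulmxA.
  rewrite /W XV e1.
  have -> : V *m V^T = (Km *m U) *m (Km *m U)^T by rewrite /U -VKV.
  by rewrite trmx_mul !mulmxA.
pose i0 := Ordinal n1.
pose K := rblk Km i0.
have h1 : K *m W *m K^T = 1%:M.
  by case: fX => _ /(_ i0); rewrite XW blk_mulT rblk_mulr.
have h2 : K *m (Tm *m Tm^T) *m K^T = 1%:M.
  have := stS i0; rewrite {1 2}SKT rblk_mulr trmx_mul => hh.
  by rewrite !mulmxA; rewrite !mulmxA in hh.
have Ku : K \in unitmx.
  have e : K *m (W *m K^T) = 1%:M by rewrite mulmxA.
  by have [] := mulmx1_unit e.
have KTu : K^T \in unitmx by rewrite unitmx_tr.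
have eW : W = Tm *m Tm^T.
  have h1' : K *m (W *m K^T) = 1%:M by rewrite mulmxA.
  have h2' : K *m (Tm *m Tm^T *m K^T) = 1%:M by rewrite mulmxA.
  have e1 : W *m K^T = Tm *m Tm^T *m K^T.
    by rewrite -[LHS](mulKmx Ku) -[RHS](mulKmx Ku) h1' h2'.
  by rewrite -[LHS](mulmxK KTu) -[RHS](mulmxK KTu) e1.
by rewrite XW eW [in RHS]SKT [(Km *m Tm)^T]trmx_mul !mulmxA.
Qed.

Lemma rankSS : \rank (S *m S^T) = d.
Proof.
apply/eqP; rewrite eqn_leq; apply/andP; split.
  rewrite {1}SKT -mulmxA; apply: leq_trans (mxrankM_maxl _ _) _; exact: rank_leq_col.
pose i0 := Ordinal n1.
have h : \rank (blk (S *m S^T) i0 i0) = d by rewrite blkSS stS mxrank1.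
rewrite -[X in (X <= _)%N]h blk_sel; apply: leq_trans (mxrankM_maxl _ _) _.
exact: mxrankM_maxr.
Qed.

Lemma uniq_conclusion : unique_global_max A S.
Proof.
split.
- exact: feasSS.
- move=> X fX ne; rewrite ltNge; apply/negP => h.
  by apply: ne; apply: unique.
- exact: rankSS.
have [L TL] : exists L : 'M[R]_d, Tm *m Tm^T = L *m L^T.
  apply: chol; first by rewrite trmx_mul trmxK.
  by move=> y; rewrite /qf -mulmxA -fip_mulT fip_ge0.
have RR : (Km *m L) *m (Km *m L)^T = S *m S^T.
  by rewrite [in RHS]SKT [(Km *m Tm)^T]trmx_mul [(Km *m L)^T]trmx_mul !mulmxA -(mulmxA _ L) -TL !mulmxA.
have feasP : forall R' : 'M[R]_(n * d, d), P_feasible R' -> sdp_feasible (R' *m R'^T).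
  move=> R' hR; split; last by move=> i; rewrite blk_mulT hR.
  split; first by rewrite trmx_mul trmxK.
  by move=> x; rewrite qfE /qf -mulmxA -fip_mulT fip_ge0.
exists (Km *m L); split => //.
- move=> i; rewrite rblk_mulr trmx_mul !mulmxA -(mulmxA _ L) -TL.
  by have := stS i; rewrite {1 2}SKT rblk_mulr trmx_mul !mulmxA.
- move=> R' hR; rewrite /fobj RR.
  have [V [XV fA]] := fipA_X (feasP _ hR); rewrite fA fipA_SS.
  by rewrite gerDl oppr_le0 sumr_ge0 // => c _; apply: qfB_ge0.
- move=> R' hR; rewrite /fobj RR => e; apply: unique; first exact: feasP.
  by rewrite e.
Qed.

End WithQ.

Lemma opnorm0 m k : opnorm (0 : 'M[R]_(m, k)) = 0.
Proof.
apply/eqP; rewrite eq_le opnorm_ge0 andbT; apply: opnorm_le => x _.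
by rewrite mul0mx frob0.
Qed.

Lemma Ei_blkrow i : Ei i = blkrow Delta i *m S.
Proof. by rewrite Ei_full blkrow_mul. Qed.

Lemma frobQ (Q : 'M[R]_(d, p)) (x : 'cV[R]_p) : Q *m Q^T = 1%:M -> frob (Q *m x) <= frob x.
Proof.
move=> QQ.
have h1 : forall y : 'cV[R]_d, frob (Q^T *m y) = frob y.
  by move=> y; rewrite /frob fip_mulT mulmxA QQ mul1mx.
have [->|qn0] := eqVneq (frob (Q *m x)) 0; first exact: frob_ge0.
have q0 : 0 < frob (Q *m x) by rewrite lt_def qn0 frob_ge0.
have : frob (Q *m x) ^+ 2 <= frob x * frob (Q *m x).
  rewrite frob2 -fip_mulT fipC; apply: le_trans (CS _ _) _.
  by rewrite h1.
by rewrite expr2 ler_pM2r.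
Qed.

Lemma Ei_bound i r (Q : 'M[R]_(d, p)) : Q *m Q^T = 1%:M ->
  \sum_i fip (Sb i - Q) (Sb i - Q) <= r ^+ 2 -> 0 <= r ->
  opnorm (Ei i) <= opnorm (blkrow Delta i)^T * r + opnorm (blkrow Delta i *m Zm).
Proof.
move=> QQ hQ r0; apply: opnorm_le => x x1.
set D := blkrow Delta i.
have e : Ei i *m x = D *m ((S - Zm *m Q) *m x) + (D *m Zm) *m (Q *m x).
  by rewrite Ei_blkrow mulmxBl mulmxBr !mulmxA -/D subrK.
have hSZ : frob (S - Zm *m Q) <= r.
  apply: sq_le_le => //; rewrite frob2 fip_rblk; apply: le_trans hQ.
  rewrite le_eqVlt; apply/orP; left; apply/eqP; apply: eq_bigr => j _.
  by rewrite rblkD rblkN rblk_mulr rblkZmx mul1mx.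
rewrite e; apply: le_trans (frobD _ _) _; apply: lerD.
  have := opnorm_tr D^T ((S - Zm *m Q) *m x); rewrite trmxK => h.
  apply: le_trans h _; rewrite ler_wpM2l ?opnorm_ge0 //.
  apply: le_trans (frob_mul _ _) _.
  by rewrite -[r]mulr1 ler_pM ?frob_ge0.
apply: le_trans (opnorm_mul _ _) _.
rewrite -[X in _ <= X]mulr1 ler_wpM2l ?opnorm_ge0 //.
exact: le_trans (frobQ _ QQ) x1.
Qed.

Lemma claim1 rho : dF S <= rho -> 0 <= rho ->
  Mx <= rho * \big[Num.max/0]_(i < n) opnorm (blkrow Delta i)^T
        + \big[Num.max/0]_(i < n) opnorm (blkrow Delta i *m Zm).
Proof.
move=> hr r0.
set mD := \big[Num.max/0]_(i < n) opnorm (blkrow Delta i)^T.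
set mDZ := \big[Num.max/0]_(i < n) opnorm (blkrow Delta i *m Zm).
have mD0 : 0 <= mD by apply: le_trans (opnorm_ge0 _) (le_bigmax _ _ (Ordinal n1)).
have mDZ0 : 0 <= mDZ by apply: le_trans (opnorm_ge0 _) (le_bigmax _ _ (Ordinal n1)).
apply: bigmax_le; first by rewrite addr_ge0 // mulr_ge0.
move=> i _; apply/ler_addgt0Pr => e e0.
pose eta := e / (mD + 1).
have mD1 : 0 < mD + 1 by apply: (le_lt_trans mD0); rewrite ltrDl.
have eta0 : 0 < eta by rewrite divr_gt0.
have hr' : dF S < rho + eta by apply: le_lt_trans hr _; rewrite ltrDl.
have [Q [QQ hQ]] := exQ hr'.
have r0' : 0 <= rho + eta by rewrite addr_ge0 // ltW.
have hb := Ei_bound i QQ (ltW hQ) r0'.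
have h1 : opnorm (blkrow Delta i)^T <= mD by apply: le_bigmax.
have h2 : opnorm (blkrow Delta i *m Zm) <= mDZ by apply: le_bigmax.
have h3 : opnorm (blkrow Delta i)^T * (rho + eta) <= mD * (rho + eta) by rewrite ler_wpM2r.
have ee : eta * (mD + 1) = e by rewrite /eta divfK // gt_eqF.
nra.
Qed.

Lemma blk0 i j : blk (0 : 'M[R]_(n * d)) i j = 0.
Proof. by apply/matrixP => a b; rewrite !mxE. Qed.

Lemma claim2 rho : dF S <= rho -> 0 <= rho -> (rho = 0 -> opnorm Delta = 0) ->
  3 / 2 * rho ^+ 2 <= n%:R - Mx - opnorm Delta -> unique_global_max A S.
Proof.
move=> hr r0 hz hU.
pose U := n%:R - Mx - opnorm Delta.
have hU' : 3 / 2 * rho ^+ 2 <= U := hU.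
have dF0 := dF_ge0.
have key : dF S ^+ 2 < 2 * U.
  have [rz|rpos] := eqVneq rho 0.
    have D0' : Delta = 0 by apply: opnorm_eq0; apply: hz.
    have Mx0 : Mx = 0.
      apply/eqP; rewrite eq_le Mx_ge0 andbT; apply: bigmax_le => // i _.
      rewrite /Ei big1 ?opnorm0 // => j _.
      by rewrite D0' blk0 mul0mx.
    have dz : dF S = 0 by apply/eqP; rewrite eq_le dF0 andbT -rz hr.
    rewrite /U Mx0 dz (hz rz) expr0n /= !subr0 mulr_gt0 //.
    by rewrite ltr0n.
  have rp : 0 < rho by rewrite lt_def rpos r0.
  have h1 : dF S ^+ 2 <= rho ^+ 2 by rewrite !expr2 ler_pM.
  have h2 : 0 < rho ^+ 2 by rewrite exprn_gt0.
  lra.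
pose r := Num.sqrt ((dF S ^+ 2 + 2 * U) / 2).
have arg0 : 0 <= (dF S ^+ 2 + 2 * U) / 2.
  have : 0 <= dF S ^+ 2 by apply: sqr_ge0.
  lra.
have r2 : r ^+ 2 = (dF S ^+ 2 + 2 * U) / 2 by rewrite sqr_sqrtr.
have rgt : dF S < r.
  have : dF S ^+ 2 < r ^+ 2 by rewrite r2; lra.
  by rewrite (ltr_pXn2r (isT : (0 < 2)%N)) ?nnegrE ?sqrtr_ge0.
have [Q [QQ hQ]] := exQ rgt.
have pos : 0 < n%:R - r ^+ 2 / 2 - Mx - opnorm Delta.
  rewrite r2; move: key; rewrite /U; lra.
exact: (uniq_conclusion QQ (ltW hQ) pos).
Qed.

End Main.

Unset Implicit Arguments.

Theorem proposition2 (R : realType) (n d p : nat) (Delta : 'M[R]_(n * d))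
    (S : 'M[R]_(n * d, p)) (delta : R) :
  (1 <= n)%N -> (1 <= d)%N -> (d < p)%N ->
  Delta^T = Delta -> (forall i, blk Delta i i = 0) ->
  0 < delta ->
  second_order_critical (Amx Delta) S ->
  dF S <= delta * Num.sqrt (d%:R / n%:R) * opnorm Delta ->
  let M := \big[Num.max/0]_(i < n)
             opnorm (\sum_(j < n | j != i) blk Delta i j *m rblk S j) in
  let mD := \big[Num.max/0]_(i < n) opnorm (blkrow Delta i)^T in
  let mDZ := \big[Num.max/0]_(i < n) opnorm (blkrow Delta i *m Zmx R n d) in
  [/\ M <= delta * Num.sqrt (d%:R / n%:R) * opnorm Delta * mD + mDZ,
      n%:R >= 3 * delta ^+ 2 * d%:R * opnorm Delta ^+ 2 / (2 * n%:R)
              + M + opnorm Delta ->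
        unique_global_max (Amx Delta) S &
      n%:R >= 3 * delta ^+ 2 * d%:R * opnorm Delta ^+ 2 / (2 * n%:R)
              + delta * Num.sqrt (d%:R / n%:R) * opnorm Delta * mD + mDZ
              + opnorm Delta ->
        unique_global_max (Amx Delta) S].
Proof.
move=> n1 d1 dp sD D0 de0 soc hdF M mD mDZ.
have nz : 0 < n%:R :> R by rewrite ltr0n.
have s0 : 0 < Num.sqrt (d%:R / n%:R) :> R by rewrite sqrtr_gt0 divr_gt0 // ltr0n.
have r0 : 0 <= delta * Num.sqrt (d%:R / n%:R) * opnorm Delta.
  by rewrite mulr_ge0 ?opnorm_ge0 // mulr_ge0 // ltW.
have MM : M = Mx Delta S by [].
have c1 : M <= delta * Num.sqrt (d%:R / n%:R) * opnorm Delta * mD + mDZ.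
  by rewrite MM; exact: (claim1 n1 dp D0 hdF r0).
have hz : delta * Num.sqrt (d%:R / n%:R) * opnorm Delta = 0 -> opnorm Delta = 0.
  move=> /eqP; rewrite !mulf_eq0 (gt_eqF de0) (gt_eqF s0) /=.
  by move=> /eqP.
have e3 : 3 * delta ^+ 2 * d%:R * opnorm Delta ^+ 2 / (2 * n%:R)
          = 3 / 2 * (delta * Num.sqrt (d%:R / n%:R) * opnorm Delta) ^+ 2.
  rewrite !exprMn sqr_sqrtr ?divr_ge0 ?ler0n //.
  by field; rewrite gt_eqF.
have c2 : n%:R >= 3 * delta ^+ 2 * d%:R * opnorm Delta ^+ 2 / (2 * n%:R)
              + M + opnorm Delta -> unique_global_max (Amx Delta) S.
  move=> h; apply: (claim2 n1 dp sD D0 soc hdF r0 hz).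
  rewrite -MM; move: h; rewrite e3; lra.
split => // h; apply: c2; move: h c1; lra.
Qed.
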